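(* Let $N\ge 1$, let $1\ge x^{(1)}>x^{(2)}>\dots>x^{(N)}\ge 0$ and $y^{(1)},\dots,y^{(N)}\in\mathbb{R}$. For $a>0$ let $TNN_a$ be the triangularly-constructed network described in the context, and let $\delta(a)=1-\sigma(a)$. Then for every $k=1,\dots,N$, $$\big|TNN_a(x^{(k)})-y^{(k)}\big|\le (N+1)\,\delta(a)\,\max_{1\le j\le N}|y^{(j)}|.$$ Consequently, for every $\epsilon>0$ there exists $a>0$ such that $|TNN_a(x^{(k)})-y^{(k)}|\le\epsilon$ for all $k=1,\dots,N$ (in particular the average error $\frac1N\sum_k|TNN_a(x^{(k)})-y^{(k)}|\le\epsilon$).
   Context: Let $\sigma(t)=1/(1+e^{-t})$ be the sigmoid; note $\sigma(-a)=1-\sigma(a)$. Data: $1\ge x^{(1)}>x^{(2)}>\dots>x^{(N)}\ge0$ with labels $y^{(k)}\in\mathbb{R}$. Set $\Delta^{(k)}=x^{(k)}-x^{(k+1)}$ for $k=1,\dots,N-1$, and let $\Delta^{(N)}>0$ be an arbitrary fixed positive number (equivalently $\Delta^{(N)}=x^{(N)}-x^{(N+1)}$ for a dummy point $x^{(N+1)}<x^{(N)}$). Given $a>0$, define $W,b\in\mathbb{R}^N$ by $W_{N-k+1}=2a/\Delta^{(k)}$ and $b_{N-k+1}=a-W_{N-k+1}x^{(k)}$ for $k=1,\dots,N$. Define $\alpha\in\mathbb{R}^N$ by $\alpha_i=y^{(N-i+1)}-y^{(N-i+2)}$ for $i=1,\dots,N$, with the convention $y^{(N+1)}:=0$ (so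 that $y^{(k)}=\sum_{i=1}^{N-k+1}\alpha_i$). The triangularly-constructed neural network is $TNN_a(x)=\sum_{i=1}^N\alpha_i\,\sigma(W_ix+b_i)$ for $x\in\mathbb{R}$. *)

(* Defs.v *)
(* concrete reals R. Indices are 1-based as in the paper. *)
From Stdlib Require Import Reals Lra Lia Arith.
Open Scope R_scope.

Definition sigmoid (t : R) : R := / (1 + exp (- t)).

Fixpoint sum1 (f : nat -> R) (n : nat) : R :=
  match n with
  | O => 0
  | S m => sum1 f m + f (S m)
  end.

(* max_{1<=j<=n} |y j|  (0 for n = 0; since |y j| >= 0 this is the max for n >= 1) *)
Fixpoint maxabs (y : nat -> R) (n : nat) : R :=
  match n with
  | O => 0
  | S m => Rmax (maxabs y m) (Rabs (y (S m)))
  end.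

(* Delta^(k) = x^(k) - x^(k+1) for k < N, and Delta^(N) = dN (arbitrary positive) *)
Definition Delta (N : nat) (x : nat -> R) (dN : R) (k : nat) : R :=
  if (k <? N)%nat then x k - x (S k) else dN.

Definition Wt (N : nat) (x : nat -> R) (dN a : R) (i : nat) : R :=
  2 * a / Delta N x dN (N - i + 1).

Definition bt (N : nat) (x : nat -> R) (dN a : R) (i : nat) : R :=
  a - Wt N x dN a i * x (N - i + 1)%nat.

Definition yext (N : nat) (y : nat -> R) (j : nat) : R :=
  if (j <=? N)%nat then y j else 0.

Definition alpha (N : nat) (y : nat -> R) (i : nat) : R :=
  yext N y (N - i + 1) - yext N y (N - i + 2).

Definition TNN (N : nat) (x y : nat -> R) (dN a t : R) : R :=
  sum1 (fun i => alpha N y i * sigmoid (Wt N x dN a i * t + bt N x dN a i)) N.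

Definition delta (a : R) : R := 1 - sigmoid a.

(* Main.v *)
From Pilot Require Import Defs.
From Stdlib Require Import Reals Lra Lia Arith.
Open Scope R_scope.

Lemma sum1_ext f g n : (forall i, (1 <= i <= n)%nat -> f i = g i) -> sum1 f n = sum1 g n.
Proof.
  induction n; intros H; simpl; auto.
  rewrite IHn; [rewrite H; auto; lia|]. intros; apply H; lia.
Qed.

Lemma sum1_le f g n : (forall i, (1 <= i <= n)%nat -> f i <= g i) -> sum1 f n <= sum1 g n.
Proof.
  induction n; intros H; simpl; [lra|].
  assert (sum1 f n <= sum1 g n) by (apply IHn; intros; apply H; lia).
  assert (f (S n) <= g (S n)) by (apply H; lia). lra.
Qed.

Lemma sum1_shift f n : sum1 f (S n) = f 1%nat + sum1 (fun i => f (S i)) n.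
Proof. induction n; simpl in *; [lra|]. rewrite IHn. lra. Qed.

Lemma sum1_rev f n : sum1 f n = sum1 (fun j => f (n - j + 1)%nat) n.
Proof.
  induction n; [reflexivity|].
  rewrite (sum1_shift (fun j => f (S n - j + 1)%nat) n).
  replace (S n - 1 + 1)%nat with (S n) by lia.
  simpl (sum1 f (S n)). rewrite IHn. simpl. lra.
Qed.

Lemma sum1_abs f n : Rabs (sum1 f n) <= sum1 (fun i => Rabs (f i)) n.
Proof.
  induction n; simpl. rewrite Rabs_R0; lra.
  eapply Rle_trans; [apply Rabs_triang|]. lra.
Qed.

Lemma sum1_const c n : sum1 (fun _ => c) n = INR n * c.
Proof. induction n; simpl sum1. simpl; lra. rewrite IHn, S_INR. lra. Qed.

Lemma sum1_single f k n : (1 <= k <= n)%nat -> (forall j, j <> k -> f j = 0) -> sum1 f n = f k.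
Proof.
  induction n; intros Hk H; [lia|]. simpl.
  destruct (Nat.eq_dec k (S n)) as [->|Hne].
  - assert (sum1 f n = 0). { clear IHn Hk. assert (forall m, (m <= n)%nat -> sum1 f m = 0).
      { induction m; intros; simpl; auto. rewrite IHm by lia. rewrite H by lia. lra. }
      apply H0; lia. }
    lra.
  - rewrite IHn by (auto; lia). rewrite (H (S n)) by lia. lra.
Qed.

Lemma sum1_split f g n : sum1 (fun i => f i + g i) n = sum1 f n + sum1 g n.
Proof. induction n; simpl; [lra|]. rewrite IHn; lra. Qed.

Lemma sbp (Y c : nat -> R) n : c 0%nat = 0 ->
  sum1 (fun j => (Y j - Y (S j)) * c j) n =
  sum1 (fun j => Y j * (c j - c (pred j))) n - Y (S n) * c n.
Proof.
  intros H0; induction n; simpl. rewrite H0; lra. rewrite IHn. lra.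
Qed.

Lemma maxabs_ge y n j : (1 <= j <= n)%nat -> Rabs (y j) <= maxabs y n.
Proof.
  induction n; intros; [lia|]. simpl.
  destruct (Nat.eq_dec j (S n)) as [->|]. apply Rmax_r.
  eapply Rle_trans; [apply IHn; lia| apply Rmax_l].
Qed.

Lemma maxabs_nn y n : 0 <= maxabs y n.
Proof. induction n; simpl; [lra|]. eapply Rle_trans; [apply IHn|apply Rmax_l]. Qed.

Lemma sig_pos t : 0 < sigmoid t.
Proof. unfold sigmoid. apply Rinv_0_lt_compat. pose proof (exp_pos (-t)). lra. Qed.

Lemma sig_lt1 t : sigmoid t < 1.
Proof. unfold sigmoid. pose proof (exp_pos (-t)). rewrite <- Rinv_1.
  apply Rinv_lt_contravar; lra. Qed.

Lemma sig_le t u : t <= u -> sigmoid t <= sigmoid u.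
Proof.
  intros H; unfold sigmoid. pose proof (exp_pos (-t)); pose proof (exp_pos (-u)).
  apply Rinv_le_contravar; [lra|].
  destruct (Rle_lt_or_eq _ _ H) as [Hl|He]; [|rewrite He; lra].
  assert (exp (-u) < exp (-t)) by (apply exp_increasing; lra). lra.
Qed.

Lemma sig_neg a : sigmoid (- a) = delta a.
Proof.
  unfold delta, sigmoid. rewrite Ropp_involutive.
  pose proof (exp_pos a); pose proof (exp_pos (-a)).
  assert (exp a * exp (-a) = 1) by (rewrite <- exp_plus; replace (a + - a) with 0 by lra; apply exp_0).
  field_simplify_eq. all: try lra. all: try nra.
Qed.

Lemma xdec (N : nat) (x : nat -> R) : (forall k : nat, (1 <= k < N)%nat -> x k > x (S k)) ->
  forall p q, (1 <= p <= q)%nat -> (q <= N)%nat -> x q <= x p.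
Proof.
  intros H p q Hpq HqN. induction q; [lia|].
  destruct (Nat.eq_dec p (S q)) as [->|]; [lra|].
  assert (x (S q) < x q) by (apply H; lia).
  assert (x q <= x p) by (apply IHq; lia). lra.
Qed.

Lemma part1 (N : nat) (x y : nat -> R) (dN : R) :
  (1 <= N)%nat ->
  (forall k : nat, (1 <= k < N)%nat -> x k > x (S k)) ->
  0 < dN ->
  forall a : R, 0 < a ->
     forall k : nat, (1 <= k <= N)%nat ->
       Rabs (TNN N x y dN a (x k) - y k)
         <= (INR N + 1) * delta a * maxabs y N.
Proof.
  intros HN Hx HdN a Ha k Hk.
  set (D := Pilot.Defs.Delta N x dN).
  set (s := fun j => sigmoid (2 * a / D j * x k + (a - 2 * a / D j * x j))).
  set (Y := yext N y).
  set (ind := fun j : nat => if (k <=? j)%nat then 1 else 0).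
  set (c := fun j : nat => match j with O => 0 | _ => s j - ind j end).
  assert (HT : TNN N x y dN a (x k) = sum1 (fun j => (Y j - Y (S j)) * s j) N).
  { unfold TNN. rewrite sum1_rev. apply sum1_ext. intros j Hj.
    assert (E1 : (N - (N - j + 1) + 1 = j)%nat) by lia.
    assert (E2 : (N - (N - j + 1) + 2 = S j)%nat) by lia.
    unfold alpha, bt, Wt. rewrite E1, E2. reflexivity. }
  assert (Hy : y k = sum1 (fun j => (Y j - Y (S j)) * ind j) N).
  { rewrite sbp by (unfold ind; replace (k <=? 0)%nat with false by (symmetry; apply Nat.leb_gt; lia); reflexivity).
    assert (Y (S N) = 0) by (unfold Y, yext; destruct (S N <=? N)%nat eqn:E; [apply Nat.leb_le in E; lia|auto]).
    rewrite H, (sum1_single _ k) by (auto; intros j Hj; unfold ind;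
      destruct (k <=? j)%nat eqn:E1, (k <=? pred j)%nat eqn:E2;
      try (apply Nat.leb_le in E1); try (apply Nat.leb_le in E2);
      try (apply Nat.leb_gt in E1); try (apply Nat.leb_gt in E2); try lra; lia).
    unfold Y, ind, yext. replace (k <=? N)%nat with true by (symmetry; apply Nat.leb_le; lia).
    replace (k <=? k)%nat with true by (symmetry; apply Nat.leb_le; lia).
    replace (k <=? pred k)%nat with false by (symmetry; apply Nat.leb_gt; lia). lra. }
  assert (HE : TNN N x y dN a (x k) - y k = sum1 (fun j => (Y j - Y (S j)) * c j) N).
  { rewrite HT, Hy.
    replace (sum1 (fun j => (Y j - Y (S j)) * s j) N - sum1 (fun j => (Y j - Y (S j)) * ind j) N)
      with (sum1 (fun j => (Y j - Y (S j)) * s j + - ((Y j - Y (S j)) * ind j)) N).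
    2:{ rewrite sum1_split. assert (forall f n, sum1 (fun j => - f j) n = - sum1 f n).
        { induction n; simpl; [lra|]. rewrite IHn; lra. }
        rewrite H. lra. }
    apply sum1_ext. intros j Hj. unfold c. destruct j; [lia|]. lra. }
  rewrite HE, sbp by reflexivity.
  assert (HYN : Y (S N) = 0) by (unfold Y, yext; destruct (S N <=? N)%nat eqn:E; [apply Nat.leb_le in E; lia|auto]).
  rewrite HYN, Rmult_0_l, Rminus_0_r.
  set (d := delta a).
  assert (Hd : 0 < d) by (unfold d; rewrite <- sig_neg; apply sig_pos).
  assert (HDpos : forall j, (1 <= j <= N)%nat -> 0 < D j).
  { intros j Hj. unfold D, Pilot.Defs.Delta. destruct (j <? N)%nat eqn:E; [|lra].
    apply Nat.ltb_lt in E. assert (x j > x (S j)) by (apply Hx; lia). lra. }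
  assert (Hlo : forall j, (1 <= j < k)%nat -> 0 <= c j <= d).
  { intros j Hj. unfold c. destruct j; [lia|].
    unfold ind. replace (k <=? S j)%nat with false by (symmetry; apply Nat.leb_gt; lia).
    split; [pose proof (sig_pos (2 * a / D (S j) * x k + (a - 2 * a / D (S j) * x (S j)))); unfold s; lra|].
    rewrite Rminus_0_r. unfold s, d. rewrite <- sig_neg. apply sig_le.
    assert (HD : D (S j) = x (S j) - x (S (S j))).
    { unfold D, Pilot.Defs.Delta. replace (S j <? N)%nat with true by (symmetry; apply Nat.ltb_lt; lia). reflexivity. }
    assert (x k <= x (S (S j))) by (apply (xdec N x Hx); lia).
    assert (0 < D (S j)) by (apply HDpos; lia).
    replace (2 * a / D (S j) * x k + (a - 2 * a / D (S j) * x (S j)))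
      with (a - 2 * a * ((x (S j) - x k) / D (S j))) by (field; lra).
    assert (1 <= (x (S j) - x k) / D (S j)).
    { apply (Rmult_le_reg_r (D (S j))); auto. unfold Rdiv. rewrite Rmult_assoc, Rinv_l; lra. }
    nra. }
  assert (Hhi : forall j, (k <= j <= N)%nat -> -d <= c j <= 0).
  { intros j Hj. unfold c. destruct j; [lia|].
    unfold ind. replace (k <=? S j)%nat with true by (symmetry; apply Nat.leb_le; lia).
    split; [|pose proof (sig_lt1 (2 * a / D (S j) * x k + (a - 2 * a / D (S j) * x (S j)))); unfold s; lra].
    unfold s, d, delta.
    assert (x (S j) <= x k) by (apply (xdec N x Hx); lia).
    assert (0 < D (S j)) by (apply HDpos; lia).
    replace (2 * a / D (S j) * x k + (a - 2 * a / D (S j) * x (S j)))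
      with (a + 2 * a * ((x k - x (S j)) / D (S j))) by (field; lra).
    assert (0 <= (x k - x (S j)) / D (S j)).
    { apply Rmult_le_pos; [lra|]. left; apply Rinv_0_lt_compat; auto. }
    assert (sigmoid a <= sigmoid (a + 2 * a * ((x k - x (S j)) / D (S j)))) by (apply sig_le; nra).
    lra. }
  set (M := maxabs y N).
  eapply Rle_trans; [apply sum1_abs|].
  apply Rle_trans with (sum1 (fun j => M * (d + if Nat.eq_dec j k then d else 0)) N).
  - apply sum1_le. intros j Hj. rewrite Rabs_mult.
    assert (HY : Rabs (Y j) <= M).
    { unfold Y, yext, M. replace (j <=? N)%nat with true by (symmetry; apply Nat.leb_le; lia).
      apply maxabs_ge; lia. }
    assert (Hc : Rabs (c j - c (pred j)) <= d + (if Nat.eq_dec j k then d else 0)).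
    { destruct (Nat.eq_dec j k) as [->|Hne].
      - destruct k as [|k']; [lia|]. simpl pred.
        destruct k' as [|k''].
        + simpl (c 0%nat). pose proof (Hhi 1%nat ltac:(lia)). apply Rabs_le; lra.
        + pose proof (Hhi (S (S k'')) ltac:(lia)). pose proof (Hlo (S k'') ltac:(lia)).
          apply Rabs_le; lra.
      - destruct j as [|j']; [lia|]. simpl pred.
        destruct j' as [|j''].
        + simpl (c 0%nat). assert (k = 1 \/ 1 < k)%nat as [|] by lia.
          * pose proof (Hhi 1%nat ltac:(lia)). apply Rabs_le; lra.
          * pose proof (Hlo 1%nat ltac:(lia)). apply Rabs_le; lra.
        + assert (S (S j'') < k \/ k < S (S j''))%nat as [|] by lia.
          * pose proof (Hlo (S (S j'')) ltac:(lia)). pose proof (Hlo (S j'') ltac:(lia)).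
            apply Rabs_le; lra.
          * pose proof (Hhi (S (S j'')) ltac:(lia)). pose proof (Hhi (S j'') ltac:(lia)).
            apply Rabs_le; lra. }
    pose proof (Rabs_pos (Y j)); pose proof (Rabs_pos (c j - c (pred j))).
    apply Rmult_le_compat; auto.
  - assert (forall f n, sum1 (fun j => M * f j) n = M * sum1 f n).
    { induction n; simpl; [lra|]. rewrite IHn; lra. }
    rewrite H, sum1_split, sum1_const.
    rewrite (sum1_single _ k) by (first [lia | intros j Hj; destruct (Nat.eq_dec j k); [lia|auto]]).
    destruct (Nat.eq_dec k k); [|lia]. unfold M. pose proof (maxabs_nn y N). nra.
Qed.

Theorem theorem1 (N : nat) (x y : nat -> R) (dN : R) :
  (1 <= N)%nat ->
  x 1%nat <= 1 ->
  (forall k : nat, (1 <= k < N)%nat -> x k > x (S k)) ->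
  0 <= x N ->
  0 < dN ->
  (forall a : R, 0 < a ->
     forall k : nat, (1 <= k <= N)%nat ->
       Rabs (TNN N x y dN a (x k) - y k)
         <= (INR N + 1) * delta a * maxabs y N)
  /\
  (forall eps : R, 0 < eps ->
     exists a : R, 0 < a /\
       (forall k : nat, (1 <= k <= N)%nat ->
          Rabs (TNN N x y dN a (x k) - y k) <= eps) /\
       sum1 (fun k => Rabs (TNN N x y dN a (x k) - y k)) N / INR N <= eps).
Proof.
  intros HN H1 Hx H0 HdN.
  pose proof (part1 N x y dN HN Hx HdN) as P.
  split; [exact P|].
  intros eps Heps.
  set (M := maxabs y N). pose proof (maxabs_nn y N) as HM.
  assert (HNp : 1 <= INR N) by (apply (le_INR 1); lia).
  set (K := (INR N + 1) * (M + 1)).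
  assert (HK : 0 < K) by (unfold K; fold M in HM; nra).
  set (a := Rmax 1 (ln (K / eps))).
  assert (Ha : 0 < a) by (unfold a; pose proof (Rmax_l 1 (ln (K / eps))); lra).
  assert (Hd : delta a <= eps / K).
  { rewrite <- sig_neg. unfold sigmoid. rewrite Ropp_involutive.
    pose proof (exp_pos a).
    assert (Hel : exp (ln (K / eps)) <= exp a).
    { destruct (Rle_lt_or_eq _ _ (Rmax_r 1 (ln (K / eps)))) as [Hl|He].
      - left; apply exp_increasing; auto.
      - unfold a; rewrite <- He; lra. }
    rewrite exp_ln in Hel by (apply Rdiv_lt_0_compat; auto).
    apply Rle_trans with (/ (K / eps)).
    - apply Rinv_le_contravar; [apply Rdiv_lt_0_compat; auto|lra].
    - right. field; lra. }
  assert (Hall : forall k, (1 <= k <= N)%nat -> Rabs (TNN N x y dN a (x k) - y k) <= eps).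
  { intros k Hk. eapply Rle_trans; [apply P; auto|]. fold M.
    assert (0 <= delta a) by (rewrite <- sig_neg; left; apply sig_pos).
    apply Rle_trans with ((INR N + 1) * (eps / K) * M).
    - apply Rmult_le_compat_r; auto. apply Rmult_le_compat_l; lra.
    - unfold K. apply Rle_trans with ((INR N + 1) * (eps / ((INR N + 1) * (M + 1))) * (M + 1)); [|right; field; fold M in HM; repeat split; lra].
      apply Rmult_le_compat_l; [|lra].
      apply Rmult_le_pos; [lra|]. apply Rlt_le, Rdiv_lt_0_compat; auto. }
  exists a. split; [auto|]. split; [auto|].
  apply (Rmult_le_reg_r (INR N)); [lra|]. unfold Rdiv. rewrite Rmult_assoc, Rinv_l by lra.
  rewrite Rmult_1_r.
  apply Rle_trans with (sum1 (fun _ => eps) N); [apply sum1_le; auto|].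
  rewrite sum1_const; lra.
Qed.
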